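(* Let $D$ be a non-commutative division ring with center $F$. If $M$ is an irreducible locally solvable maximal subgroup of $D^*$, then its derived subgroup $M'$ is not contained in $F$.
   Context: $D^*$ is the multiplicative group of $D$; maximal subgroup = proper subgroup maximal among proper subgroups. A subgroup $G\le D^*$ is irreducible if the division subring $F(G)$ generated by $F\cup G$ equals $D$. Locally solvable: every finitely generated subgroup solvable. *)

(* Defs.v *)
(* Groups inside the (possibly infinite) multiplicative group
   D^* of a division ring D are represented as predicates D -> Prop. *)
From mathcomp Require Import all_boot all_order all_algebra.
Set Implicit Arguments. Unset Strict Implicit. Unset Printing Implicit Defensive.
Import GRing.Theory.
Local Open Scope ring_scope.

(* D is a division ring: every nonzero element is a unit (D is nontrivial,
   being an nzRing). *)
Definition division_ring (D : unitRingType) : Prop :=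
  forall x : D, x != 0 -> x \is a GRing.unit.

Definition center (D : unitRingType) (x : D) : Prop :=
  forall y : D, x * y = y * x.

Definition subgroup (D : unitRingType) (H : D -> Prop) : Prop :=
  [/\ forall x, H x -> x != 0,
      H 1,
      forall x y, H x -> H y -> H (x * y) &
      forall x, H x -> H x^-1].

Definition gen_subgroup (D : unitRingType) (A : D -> Prop) (x : D) : Prop :=
  forall H : D -> Prop, subgroup H -> (forall a, A a -> H a) -> H x.

Definition commr (D : unitRingType) (x y : D) : D := x^-1 * y^-1 * x * y.

Definition derived (D : unitRingType) (H : D -> Prop) : D -> Prop :=
  gen_subgroup (fun c => exists x y, [/\ H x, H y & c = commr x y]).

Fixpoint derived_series (D : unitRingType) (H : D -> Prop) (n : nat) : D -> Prop :=
  match n with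
  | O => H
  | S m => derived (derived_series H m)
  end.

Definition solvable_grp (D : unitRingType) (H : D -> Prop) : Prop :=
  exists n, forall x, derived_series H n x -> x = 1.

Definition locally_solvable (D : unitRingType) (G : D -> Prop) : Prop :=
  forall s : seq D, (forall a, a \in s -> G a) ->
    solvable_grp (gen_subgroup (fun a => a \in s)).

Definition maximal_subgroup (D : unitRingType) (M : D -> Prop) : Prop :=
  [/\ subgroup M,
      exists x : D, x != 0 /\ ~ M x &
      forall H : D -> Prop, subgroup H -> (forall x, M x -> H x) ->
        (exists x : D, x != 0 /\ ~ H x) -> forall x, H x -> M x].

Definition division_subring (D : unitRingType) (S : D -> Prop) : Prop :=
  [/\ S 0, S 1,
      forall x y, S x -> S y -> S (x - y),
      forall x y, S x -> S y -> S (x * y) &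
      forall x, S x -> x != 0 -> S x^-1].

Definition div_subring_gen (D : unitRingType) (G : D -> Prop) (x : D) : Prop :=
  forall S : D -> Prop, division_subring S ->
    (forall a, center a -> S a) -> (forall a, G a -> S a) -> S x.

Definition irreducible_grp (D : unitRingType) (G : D -> Prop) : Prop :=
  forall x : D, div_subring_gen G x.

(* Main.v *)
Require Import Defs.
From mathcomp Require Import all_boot all_order all_algebra.
Import GRing.Theory.
Local Open Scope ring_scope.

Lemma zmod_move (V : zmodType) (p q r s : V) : p + q = r + s -> q - s = r - p.
Proof. by move=> e; apply/eqP; rewrite subr_eq addrAC -e [p + q]addrC addrK. Qed.

Section Aux.
Variable D : unitRingType.
Hypothesis hD : division_ring D.

Lemma unit_neq0 (u : D) : u \is a GRing.unit -> u != 0.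
Proof. by apply: contraTneq => ->; rewrite unitr0. Qed.

Lemma unitM (x y : D) : x \is a GRing.unit -> y \is a GRing.unit ->
  x * y \is a GRing.unit.
Proof. by move=> hx hy; rewrite unitrMl. Qed.

Lemma center1 : center (1 : D).
Proof. by move=> y; rewrite mul1r mulr1. Qed.

Lemma centerM (x y : D) : center x -> center y -> center (x * y).
Proof. by move=> hx hy z; rewrite -mulrA hy mulrA hx mulrA. Qed.

Lemma centerN (x : D) : center x -> center (- x).
Proof. by move=> hx z; rewrite mulNr mulrN hx. Qed.

Lemma centerB (x y : D) : center x -> center y -> center (x - y).
Proof. by move=> hx hy z; rewrite mulrBl mulrBr hx hy. Qed.

Lemma centerV (x : D) : center x -> center x^-1.
Proof.
move=> hx z; have [u|nu] := boolP (x \is a GRing.unit); last by rewrite invr_out.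
apply: (mulrI u); rewrite mulrA divrr // mul1r.
by rewrite mulrA hx -mulrA divrr // mulr1.
Qed.

Lemma commrP (x y : D) : x \is a GRing.unit -> y \is a GRing.unit ->
  center (commr x y) -> x * y = commr x y * (y * x).
Proof.
move=> hx hy hc.
have h : y * x * commr x y = x * y.
  by rewrite /commr !mulrA (mulrK hx) (mulrV hy) mul1r.
by rewrite -h hc.
Qed.

Lemma unitD (x : D) : x != 0 -> x \is a GRing.unit.
Proof. exact: hD. Qed.

Lemma center_lin (u v a : D) : center u -> center v -> u != 0 ->
  u * a = v -> center a.
Proof.
move=> hu hv nu e.
have -> : a = u^-1 * v by rewrite -e mulKr //; exact: hD.
by apply: centerM => //; apply: centerV.
Qed.

Definition Hs (a d : D) : Prop :=
  d != 0 /\ exists c, center c /\ a * d = c * (d * a).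

Lemma Hs_subgroup (a : D) : a \is a GRing.unit -> subgroup (Hs a).
Proof.
move=> ha; split.
- by move=> x [].
- split; first exact: oner_neq0.
  by exists 1; split; [exact: center1 | rewrite mulr1 !mul1r].
- move=> x y [nx [c1 [h1 e1]]] [ny [c2 [h2 e2]]]; split.
    by apply: unit_neq0; apply: unitM; apply: hD.
  exists (c1 * c2); split; first exact: centerM.
  rewrite mulrA e1 -!mulrA e2 !mulrA; congr (_ * _).
  by rewrite -!mulrA; congr (_ * _); rewrite !mulrA h2.
- move=> x [nx [c [hc e]]].
  have ux : x \is a GRing.unit by apply: hD.
  have nc : c != 0.
    apply: contraTneq isT => c0; move: e; rewrite c0 mul0r => e.
    have : a * x \is a GRing.unit by apply: unitM.
    by rewrite e unitr0.
  have uc : c \is a GRing.unit by apply: hD.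
  split; first by apply: unit_neq0; rewrite unitrV.
  exists c^-1; split; first exact: centerV.
  apply: (mulrI uc); rewrite mulVKr //.
  apply: (mulrI ux); rewrite mulVKr // mulrA -(hc x) -mulrA.
  by rewrite [x * (a / x)]mulrA mulrA -e mulrK.
Qed.

End Aux.
Arguments Hs {D}.
Arguments zmod_move {V p q r s}.
Arguments Hs_subgroup {D}.
Arguments center_lin {D}.
Arguments commrP {D}.


















Theorem lemma2p6 (D : unitRingType) (hD : division_ring D)
  (hnc : exists x y : D, x * y != y * x)
  (M : D -> Prop) (hmax : maximal_subgroup M) (hirr : irreducible_grp M)
  (hls : locally_solvable M) :
  ~ (forall x : D, derived M x -> center x).
Proof.
move=> hder.
case: hmax => [[hM0 hM1 hMM hMV] _ hmaxH].
have hU : forall m, M m -> m \is a GRing.unit by move=> m /hM0; apply: hD.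
have hcomm : forall x y, M x -> M y -> center (commr x y).
  move=> x y Mx My; apply: hder => H _ hA; apply: hA; by exists x, y.
have ecomm : forall x y, M x -> M y -> x * y = commr x y * (y * x).
  by move=> x y Mx My; apply: commrP; [exact: hU | exact: hU | exact: hcomm].
have hab : forall a b, M a -> M b -> a * b = b * a.
  move=> a b Ma Mb; apply/eqP; apply/negPn/negP => nab.
  have ua := hU a Ma; have ub := hU b Mb.
  set k := commr a b; have hk : center k by exact: hcomm.
  have e : a * b = k * (b * a) by exact: ecomm.
  have k1 : k != 1.
    by apply: contra nab => /eqP k1; rewrite e k1 mul1r.
  have ncb : ~ center b by move=> cb; move: nab; rewrite cb eqxx.
  have nca : ~ center a by move=> ca; move: nab; rewrite ca eqxx.
  have nH : ~ Hs a (1 + b).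
    move=> [_ [mu [hmu emu]]].
    rewrite mulrDr mulr1 e mulrDl mul1r mulrDr in emu.
    have e2 := zmod_move emu.
    have e3 : (k - mu) * b = mu - 1.
      by apply: (mulIr ua); rewrite -mulrA mulrBl mulrBl mul1r.
    have [kmu|kmu] := eqVneq (k - mu) 0.
      have mu1 : mu = 1 by apply/eqP; rewrite -subr_eq0 -e3 kmu mul0r.
      by move/eqP: kmu; rewrite mu1 subr_eq0 (negbTE k1).
    by apply: ncb; apply: (center_lin hD _ _ _ _ _ kmu e3);
      [apply: centerB | apply: centerB => //; exact: center1].
  have sub1 : forall m, M m -> Hs a m.
    move=> m Mm; split; first exact: hM0.
    by exists (commr a m); split; [exact: hcomm | exact: ecomm].
  have prop : exists x : D, x != 0 /\ ~ Hs a x.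
    exists (1 + b); split => //.
    apply/negP => /eqP b1; apply: ncb.
    have -> : b = -1 by apply/eqP; rewrite -subr_eq0 opprK addrC b1.
    by apply: centerN; exact: center1.
  have Ma1 : M (a + 1).
    apply: (hmaxH (Hs a) (Hs_subgroup hD a ua) sub1 prop).
    split.
      apply/negP => /eqP a1; apply: nca.
      have -> : a = -1 by apply/eqP; rewrite -subr_eq0 opprK a1.
      by apply: centerN; exact: center1.
    exists 1; split; first exact: center1.
    by rewrite mul1r mulrDr mulrDl mulr1 mul1r.
  set k' := commr b (a + 1); have hk' : center k' by exact: hcomm.
  have e' : b * (a + 1) = k' * ((a + 1) * b) by exact: ecomm.
  rewrite mulrDr mulr1 mulrDl mul1r e mulrDr in e'.
  have e2 := zmod_move e'.
  have c1 : center (k' * k - 1) by apply: centerB; [exact: centerM | exact: center1].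
  have c2 : center (1 - k') by apply: centerB; [exact: center1 | ].
  have e3 : (k' * k - 1) * a = 1 - k'.
    apply: (mulrI ub); rewrite mulrA -c1 -mulrA mulrBl mul1r -mulrA.
    by rewrite -c2 mulrBl mul1r e2.
  have [kk|kk] := eqVneq (k' * k - 1) 0.
    have k'1 : k' = 1 by apply/eqP; rewrite eq_sym -subr_eq0 -e3 kk mul0r.
    by move/eqP: kk; rewrite k'1 mul1r subr_eq0 (negbTE k1).
  apply: nca; apply: (center_lin hD _ _ _ c1 c2 kk e3).
have allC : forall x m, M m -> x * m = m * x.
  move=> x; apply: (hirr x (fun d => forall m, M m -> d * m = m * d)).
  - split.
    + by move=> m _; rewrite mul0r mulr0.
    + by move=> m _; rewrite mul1r mulr1.
    + by move=> u v hu hv m Mm; rewrite mulrBl mulrBr hu // hv.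
    + by move=> u v hu hv m Mm; rewrite -mulrA hv // mulrA hu // mulrA.
    + move=> u hu nu m Mm; have uu : u \is a GRing.unit by apply: hD.
      apply: (mulrI uu); rewrite mulrA divrr // mul1r.
      by rewrite mulrA hu // -mulrA divrr // mulr1.
  - by move=> u hu m _; apply: hu.
  - by move=> u Mu m Mm; apply: hab.
have dsC : division_subring (@center D).
  split.
  + by move=> y; rewrite mul0r mulr0.
  + exact: center1.
  + by move=> u v hu hv; apply: centerB.
  + by move=> u v hu hv; apply: centerM.
  + by move=> u hu _; apply: centerV.
have MC : forall u, M u -> center u by move=> u Mu y; rewrite (allC y u Mu).
have allZ : forall x, center x := fun x => hirr x (@center D) dsC (fun _ h => h) MC.
by case: hnc => x [y]; rewrite allZ eqxx.
Qed.
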